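(* For every $\mathcal{A}\subseteq\wp(\mathcal{G})$, $\mathrm{Ext}'(\mathcal{A})=\mathrm{Ext}(\mathcal{A})$, where $B\in\mathrm{Ext}'(\mathcal{A})$ iff either (i) there is some $f\in B$ with $f\in\mathcal{G}_{\gneq0}$, or (ii) there are finitely many $A_1,\ldots,A_n\in\mathcal{A}$ ($n\geq1$) such that for each $\langle g_1,\ldots,g_n\rangle\in A_1\times\cdots\times A_n$ with $0\notin\mathcal{E}(\{g_1,\ldots,g_n\})$, there exist $f\in B$ and $h\in\mathrm{posi}(\{g_1,\ldots,g_n\})$ with $f\geq h$.
   Context: $\Omega$ is a non-empty set and $\mathcal{G}$ is the set of bounded functions $\Omega\to\mathbb{R}$. $f\geq g$ means pointwise $\geq$; $f\gneq g$ means $f\geq g$ and $f\neq g$; $\mathcal{G}_{\gneq 0}=\{f: f\gneq 0\}$. $\mathrm{posi}(B)=\{\sum_{i=1}^m\lambda_i h_i: m\geq1,\lambda_i>0,h_i\in B\}$, and $\mathcal{E}(E):=\mathrm{posi}(E\cup\mathcal{G}_{\gneq 0})$. Definition of $\mathrm{Ext}$: if $\mathcal{A}\neq\emptyset$, $B\in\mathrm{Ext}(\mathcal{A})$ iff there are finitely many $A_1,\ldots,A_n\in\mathcal{A}$ ($n\geq1$) such that for each $\langle g_1,\ldots,g_n\rangle\in A_1\times\cdots\times A_n$ with $0\notin\mathcal{E}(\{g_1,\ldots,g_n\})$, there is some $f\in B$ with $f\in\mathcal{E}(\{g_1,\ldots,g_n\})$. If $\mathcal{A}=\emptyset$, $B\in\mathrm{Ext}(\emptyset)$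 iff $B\cap\mathcal{G}_{\gneq0}\neq\emptyset$. *)

(* Defs.v *)
From Stdlib Require Import Reals List.
Import ListNotations.
Open Scope R_scope.
Set Implicit Arguments.

Record gamble (Omega : Type) := Gamble {
  gf : Omega -> R;
  gbd : exists M : R, forall w, Rabs (gf w) <= M }.
Arguments gf {Omega} g w.

Definition gset (Omega : Type) := gamble Omega -> Prop.

Definition gge {Omega : Type} (f g : gamble Omega) : Prop :=
  forall w, gf g w <= gf f w.

Definition gpos {Omega : Type} (f : gamble Omega) : Prop :=
  (forall w, 0 <= gf f w) /\ (fun w => gf f w) <> (fun _ => 0).

Definition gzero_p {Omega : Type} (h : gamble Omega) : Prop :=
  forall w, gf h w = 0.

Definition posi {Omega : Type} (B : gset Omega) : gset Omega :=
  fun h => exists l : list (R * gamble Omega),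
    l <> [] /\
    Forall (fun p => 0 < fst p /\ B (snd p)) l /\
    forall w, gf h w = fold_right (fun p acc => fst p * gf (snd p) w + acc) 0 l.

Definition Eclos {Omega : Type} (E : gset Omega) : gset Omega :=
  posi (fun g => E g \/ gpos g).

Definition setOf {Omega : Type} (gs : list (gamble Omega)) : gset Omega :=
  fun g => In g gs.

Definition zero_notin_E {Omega : Type} (gs : list (gamble Omega)) : Prop :=
  ~ (exists h, Eclos (setOf gs) h /\ gzero_p h).

Definition ExtCond {Omega : Type} (cA : gset Omega -> Prop) (B : gset Omega) : Prop :=
  exists As : list (gset Omega),
    As <> [] /\ Forall cA As /\
    forall gs : list (gamble Omega),
      Forall2 (fun g A => A g) gs As ->
      zero_notin_E gs ->
      exists f, B f /\ Eclos (setOf gs) f.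

Definition Ext {Omega : Type} (cA : gset Omega -> Prop) (B : gset Omega) : Prop :=
  ((exists A, cA A) /\ ExtCond cA B) \/
  ((forall A, ~ cA A) /\ exists f, B f /\ gpos f).

Definition Ext' {Omega : Type} (cA : gset Omega -> Prop) (B : gset Omega) : Prop :=
  (exists f, B f /\ gpos f) \/
  (exists As : list (gset Omega),
    As <> [] /\ Forall cA As /\
    forall gs : list (gamble Omega),
      Forall2 (fun g A => A g) gs As ->
      zero_notin_E gs ->
      exists f h, B f /\ posi (setOf gs) h /\ gge f h).

(* Main.v *)
Require Import Defs.
From Stdlib Require Import Reals List.
From Stdlib Require Import Classical FunctionalExtensionality Lra.
Import ListNotations.
Open Scope R_scope.

Definition fld {Omega : Type} (l : list (R * gamble Omega)) (w : Omega) : R :=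
  fold_right (fun p acc => fst p * gf (snd p) w + acc) 0 l.

Lemma fld_bd {Omega : Type} (l : list (R * gamble Omega)) :
  exists M, forall w, Rabs (fld l w) <= M.
Proof.
  induction l as [|[c g] l IH]; simpl.
  - exists 0; intro w; unfold fld; simpl; rewrite Rabs_R0; lra.
  - destruct IH as [M HM]. destruct (gbd g) as [Mg HMg].
    exists (Rabs c * Mg + M); intro w; unfold fld; simpl.
    fold (fld l w).
    eapply Rle_trans; [apply Rabs_triang|].
    rewrite Rabs_mult. apply Rplus_le_compat; [|apply HM].
    apply Rmult_le_compat_l; [apply Rabs_pos| apply HMg].
Qed.

Lemma fld_app {Omega : Type} (l : list (R * gamble Omega)) p w :
  fld (l ++ [p]) w = fld l w + (fst p * gf (snd p) w).
Proof.
  induction l as [|q l IH]; unfold fld in *; simpl; [lra|]. rewrite IH; lra.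
Qed.

Lemma fld_nonneg {Omega : Type} (l : list (R * gamble Omega)) :
  Forall (fun p => gpos (snd p) /\ 0 < fst p) l -> forall w, 0 <= fld l w.
Proof.
  induction 1 as [|[c g] l [[Hg _] Hc] _ IH]; intro w; unfold fld in *; simpl; [lra|].
  specialize (Hg w); specialize (IH w); simpl in *. nra.
Qed.

Lemma split_l {Omega : Type} (S : gset Omega) (l : list (R * gamble Omega)) :
  Forall (fun p => 0 < fst p /\ (S (snd p) \/ gpos (snd p))) l ->
  Forall (fun p => gpos (snd p) /\ 0 < fst p) l \/
  (exists l', l' <> [] /\ Forall (fun p => 0 < fst p /\ S (snd p)) l' /\
     forall w, fld l' w <= fld l w).
Proof.
  induction 1 as [|[c g] l [Hc [HS|HP]] Hl IH].
  - left; constructor.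
  - right. destruct IH as [IH|[l' [Hn [Hf Hle]]]].
    + exists [(c,g)]; split; [congruence|]; split; [constructor; auto|].
      intro w; pose proof (fld_nonneg l IH w); unfold fld in *; simpl in *; lra.
    + exists ((c,g)::l'); split; [congruence|]; split; [constructor; auto|].
      intro w; specialize (Hle w); unfold fld in *; simpl in *; lra.
  - destruct IH as [IH|[l' [Hn [Hf Hle]]]].
    + left; constructor; auto.
    + right; exists l'; split; [auto|]; split; [auto|].
      intro w; specialize (Hle w). destruct HP as [HP _]. specialize (HP w).
      unfold fld in *; simpl in *. nra.
Qed.

Lemma ex_nz {Omega : Type} (g : gamble Omega) :
  (fun w => gf g w) <> (fun _ => 0) -> exists w, gf g w <> 0.
Proof.
  intro H. apply NNPP; intro Hn. apply H. apply functional_extensionality.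
  intro w. apply NNPP; intro H'. apply Hn; eauto.
Qed.

Lemma allpos_gpos {Omega : Type} (f : gamble Omega) l :
  l <> [] -> Forall (fun p => gpos (snd p) /\ 0 < fst p) l ->
  (forall w, gf f w = fld l w) -> gpos f.
Proof.
  intros Hn Hf Heq. split.
  - intro w; rewrite Heq; apply fld_nonneg; auto.
  - destruct l as [|[c g] l]; [congruence|]. inversion Hf; subst.
    destruct H1 as [[Hg0 Hgn] Hc]; simpl in *.
    destruct (ex_nz g Hgn) as [w Hw]. intro E.
    pose proof (equal_f E w) as E'; simpl in E'. rewrite Heq in E'.
    pose proof (fld_nonneg l H2 w). specialize (Hg0 w).
    unfold fld in *; simpl in *.
    assert (0 < gf g w) by lra. nra.
Qed.

Theorem mainTheorem4 (Omega : Type) (w0 : Omega)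
  (cA : gset Omega -> Prop) (B : gset Omega) :
  Ext' cA B <-> Ext cA B.
Proof.
  split.
  - intros [[f [Hf Hp]] | [As [Hn [HA H]]]].
    + destruct (classic (exists A, cA A)) as [[A HA]|HnA].
      * left. split; [eauto|]. exists [A]; split; [congruence|]; split; [auto|].
        intros gs _ _. exists f; split; auto.
        exists [(1, f)]; split; [congruence|]; split.
        -- constructor; simpl; auto. split; [lra|auto].
        -- intro w; simpl; ring.
      * right; split; eauto.
    + left. split.
      { destruct As as [|A As]; [congruence|]. inversion HA; eauto. }
      exists As; split; [auto|]; split; [auto|].
      intros gs Hgs Hz. destruct (H gs Hgs Hz) as [f [h [Hf [[l [Hl [Hfl Heq]]] Hge]]]].
      exists f; split; auto.
      destruct (classic ((fun w => gf f w - gf h w) = (fun _ => 0))) as [E|NE].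
      * exists l; split; [auto|]; split.
        -- eapply Forall_impl; [|exact Hfl]; simpl; intuition.
        -- intro w. pose proof (equal_f E w) as E'; simpl in E'.
           rewrite <- Heq; lra.
      * assert (Hb : exists M, forall w, Rabs (gf f w - gf h w) <= M).
        { destruct (gbd f) as [M1 H1]; destruct (gbd h) as [M2 H2].
          exists (M1 + M2); intro w. unfold Rminus.
          eapply Rle_trans; [apply Rabs_triang|]. rewrite Rabs_Ropp.
          apply Rplus_le_compat; auto. }
        set (d := Gamble (fun w => gf f w - gf h w) Hb).
        exists (l ++ [(1, d)]); split.
        { destruct l; simpl; congruence. }
        split.
        -- apply Forall_app; split.
           ++ eapply Forall_impl; [|exact Hfl]; simpl; intuition.
           ++ constructor; [|constructor]. simpl. split; [lra|right].
              split; simpl; auto. intro w; specialize (Hge w); lra.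
        -- intro w. change (gf f w = fld (l ++ [(1,d)]) w). rewrite fld_app.
           unfold fld; rewrite <- Heq; simpl; ring.
  - intros [[_ [As [Hn [HA H]]]] | [_ Hf]]; [|left; auto].
    destruct (classic (exists f, B f /\ gpos f)) as [Hg|Hng]; [left; auto|].
    right. exists As; split; [auto|]; split; [auto|].
    intros gs Hgs Hz. destruct (H gs Hgs Hz) as [f [Hf [l [Hl [Hfl Heq]]]]].
    destruct (split_l (setOf gs) l Hfl) as [Hp|[l' [Hn' [Hf' Hle]]]].
    + exfalso; apply Hng; exists f; split; auto. eapply allpos_gpos; eauto.
    + exists f, (Gamble (fld l') (fld_bd l')); split; [auto|]; split.
      * exists l'; split; [auto|]; split; [auto|]. intro w; reflexivity.
      * intro w; simpl. rewrite Heq. apply Hle.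
Qed.
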